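(* Let $D,W,V,K$ be positive integers, $M:=VK$, and let $\mathcal{D}\in\mathbb{R}^{W\times M}$ with $\mathrm{rank}(\mathcal{D})=D$. Let $\mathcal{D}_\square$ be a $D\times D$ submatrix of $\mathcal{D}$ with $\mathrm{rank}(\mathcal{D}_\square)=D$, with row index set $I\subseteq\{1,\dots,W\}$ and column index set $L\subseteq\{1,\dots,M\}$. Fix $\sharp\in\{\mathrm{st},\mathrm{m}\}$, let $\bar\sharp$ denote the other element of $\{\mathrm{st},\mathrm{m}\}$, and let $\theta(1),\dots,\theta(J)$ be index pairs in $\{1,\dots,W\}^{\times2}$ if $\sharp=\mathrm{st}$, resp. in $\{1,\dots,M\}^{\times2}$ if $\sharp=\mathrm{m}$, together with real numbers $c_1,\dots,c_J$. Call $P'=(P'_{\mathrm{st}}\,|\,P'_{\mathrm{m}})$ with $P'_{\mathrm{st}}\in\mathbb{R}^{D\times W}$, $P'_{\mathrm{m}}\in\mathbb{R}^{D\times M}$ compatible if $(P'_{\mathrm{st}})^TP'_{\mathrm{m}}=\mathcal{D}$ and $\bigl((P'_\sharp)^TP'_\sharp\bigr)_{\theta(j)}=c_j$ for all $j=1,\dots,J$. Let $P^{(0)}_{\mathrm{st}}\in\mathbb{R}^{D\times W}$, $P^{(0)}_{\mathrm{m}}\in\mathbb{R}^{D\times M}$ satisfy $(P^{(0)}_{\mathrm{st}})^TP^{(0)}_{\mathrm{m}}=\mathcal{D}$, let $P=(P_{\mathrm{st}}\,|\,P_{\mathrm{m}})$ be compatible, and let $A\in GL(\mathbb{R}^D)$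 satisfy $P_{\mathrm{st}}=A^{-T}P^{(0)}_{\mathrm{st}}$ and $P_{\mathrm{m}}=AP^{(0)}_{\mathrm{m}}$. Let $R^{(0)}_{\mathrm{st}}\in\mathbb{R}^{D\times D}$ be the submatrix of $P^{(0)}_{\mathrm{st}}$ formed by the columns with indices in $I$, and $R^{(0)}_{\mathrm{m}}\in\mathbb{R}^{D\times D}$ the submatrix of $P^{(0)}_{\mathrm{m}}$ formed by the columns with indices in $L$ (so $(R^{(0)}_{\mathrm{st}})^TR^{(0)}_{\mathrm{m}}=\mathcal{D}_\square$). For $j=1,\dots,J$, writing $\theta(j)=(\theta(j)_1,\theta(j)_2)$ and $\vec p_i$ for the $i$-th column of $P^{(0)}_\sharp$, set $$B_j:=\tfrac12\bigl(\vec p_{\theta(j)_1}\vec p_{\theta(j)_2}^{\,T}+\vec p_{\theta(j)_2}\vec p_{\theta(j)_1}^{\,T}\bigr).$$ Then $A^TA$ is uniquely determined (i.e. $A'^TA'=A^TA$ for every $A'\in GL(\mathbb{R}^D)$ such that $(A'^{-T}P^{(0)}_{\mathrm{st}}\,|\,A'P^{(0)}_{\mathrm{m}})$ is compatible) if and only if $$\mathrm{rank}\Bigl(\mathrm{vec}\bigl(R^{(0)}_{\bar\sharp}B_1(R^{(0)}_{\bar\sharp})^T\bigr)\Bigm|\cdots\Bigm|\mathrm{vec}\bigl(R^{(0)}_{\bar\sharp}B_J(R^{(0)}_{\bar\sharp})^T\bigr)\Bigr)=\tfrac12D(D+1).$$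
   Context: For a matrix $X$, $\mathrm{vec}(X)$ denotes the column vector obtained by stacking the columns of $X$ on top of each other. $GL(\mathbb{R}^D)$ is the group of invertible real $D\times D$ matrices, and $A^{-T}=(A^{-1})^T$. *)

(* Defs.v *)
From HB Require Import structures.
From mathcomp Require Import all_boot all_order all_algebra.
From mathcomp Require Export reals.
Set Implicit Arguments. Unset Strict Implicit. Unset Printing Implicit Defensive.
Import Order.TTheory GRing.Theory Num.Theory.
Local Open Scope ring_scope.

Inductive sharp := St | Mm.
Definition sharp_bar (s : sharp) : sharp := match s with St => Mm | Mm => St end.

Definition dimS (s : sharp) (W M : nat) : nat :=
  match s with St => W | Mm => M end.

Definition pick_sharp {R : Type} {D W M : nat} (s : sharp)
  (Pst : 'M[R]_(D, W)) (Pm : 'M[R]_(D, M)) : 'M[R]_(D, dimS s W M) :=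
  match s as s0 return 'M[R]_(D, dimS s0 W M) with St => Pst | Mm => Pm end.

Definition pick_sq {R : Type} {D : nat} (s : sharp) (Rst Rm : 'M[R]_D) : 'M[R]_D :=
  match s with St => Rst | Mm => Rm end.

Definition compatible {R : realType} {D W M J : nat} (s : sharp)
  (theta : 'I_J -> 'I_(dimS s W M) * 'I_(dimS s W M)) (c : 'I_J -> R)
  (Dm : 'M[R]_(W, M)) (Pst : 'M[R]_(D, W)) (Pm : 'M[R]_(D, M)) : Prop :=
  Pst^T *m Pm = Dm /\
  forall j : 'I_J,
    ((pick_sharp s Pst Pm)^T *m pick_sharp s Pst Pm) (theta j).1 (theta j).2 = c j.

(* vec X : stacking the columns of X into one column vector *)
Definition vecc {R : Type} {m n : nat} (X : 'M[R]_(m, n)) : 'cV[R]_(n * m) :=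
  (mxvec X^T)^T.

Definition Bmat {R : realType} {D N : nat} (P : 'M[R]_(D, N)) (ab : 'I_N * 'I_N)
  : 'M[R]_D :=
  2^-1 *: (col ab.1 P *m (col ab.2 P)^T + col ab.2 P *m (col ab.1 P)^T).

Definition vecB_matrix {R : realType} {D N J : nat} (Rb : 'M[R]_D)
  (P : 'M[R]_(D, N)) (theta : 'I_J -> 'I_N * 'I_N) : 'M[R]_(D * D, J) :=
  \matrix_(k < D * D, j < J) vecc (Rb *m Bmat P (theta j) *m Rb^T) k 0.
Arguments compatible {R D W M J} s theta c Dm Pst Pm.
Arguments pick_sharp {R D W M} s Pst Pm.
Arguments pick_sq {R D} s Rst Rm.

(* Main.v *)
Require Import Defs.
From HB Require Import structures.
Set Warnings "-notation-overridden,-ambiguous-paths".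
From mathcomp Require Import all_boot all_order all_algebra.
From mathcomp Require Import reals.
From mathcomp Require Import ring lra.
Import Order.TTheory GRing.Theory Num.Theory.
Local Open Scope ring_scope.
Section Main.
Variable R : realType.
Section Sym.
Variable D : nat.

Definition Pu : {set 'I_D * 'I_D} := [set p : 'I_D * 'I_D | (p.1 <= p.2)%N].

Definition Ep (p : 'I_D * 'I_D) : 'M[R]_D :=
  \matrix_(k, l) (((k == p.1) && (l == p.2)) || ((k == p.2) && (l == p.1)))%:R.

Definition Gs : 'M[R]_(#|Pu|, D * D) := \matrix_(r < #|Pu|) mxvec (Ep (enum_val r)).

Lemma card_Pu : #|Pu| = (D * (D + 1) %/ 2)%N.
Proof.
pose Pl : {set 'I_D * 'I_D} := [set p : 'I_D * 'I_D | (p.2 <= p.1)%N].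
have hsw : #|Pl| = #|Pu|.
  have -> : Pl = [set (fun p : 'I_D * 'I_D => (p.2, p.1)) x | x in Pu].
    apply/setP => [[i j]]; rewrite !inE; apply/idP/imsetP => /=.
      by move=> h; exists (j, i); rewrite ?inE.
    by move=> [[i' j']]; rewrite inE /= => h [-> ->].
  by rewrite card_imset // => [[a b] [c d]] /= [-> ->].
have hU : #|[predU Pu & Pl]| = (D * D)%N.
  transitivity #|{: 'I_D * 'I_D}|; last by rewrite card_prod card_ord.
  by apply: eq_card => [[i j]]; rewrite !inE /= leq_total.
have hI : #|[predI Pu & Pl]| = D.
  transitivity #|[set (i, i) | i in 'I_D]|; last first.
    by rewrite card_imset ?card_ord // => a b [].
  apply: eq_card => [[i j]]; rewrite !inE /=.
  apply/idP/imsetP.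
    by move=> /andP[h1 h2]; exists i => //; congr pair; apply/val_inj/eqP; rewrite /= eqn_leq h1 h2.
  by move=> [x _ [-> ->]]; rewrite leqnn.
have := cardUI Pu Pl; rewrite hU hI hsw => h.
rewrite mulnDr muln1 h addnn -mul2n mulKn //.
Qed.

Lemma Ep_sym p : (Ep p)^T = Ep p.
Proof.
apply/matrixP => k l; rewrite !mxE; congr (_ %:R); rewrite orbC; congr orb; exact: andbC.
Qed.

Lemma EpE p a b : Ep p a b = (((a, b) == p) || ((b, a) == p))%:R.
Proof.
rewrite mxE; case: p => i j /=; rewrite !xpair_eqE; congr (_ %:R); congr orb; exact: andbC.
Qed.

Lemma sum_delta (n : nat) (F : 'I_n -> R) (x : 'I_n) :
  \sum_k F k * (k == x)%:R = F x.
Proof.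
rewrite (bigD1 x) //= eqxx mulr1 big1 ?addr0 // => k /negbTE ->.
by rewrite mulr0.
Qed.

Lemma Pu_swap p q : p \in Pu -> q \in Pu -> (q.2, q.1) = p -> q = p.
Proof.
case: p => a b; case: q => c d; rewrite !inE /= => h1 h2 [e1 e2].
rewrite -e1 -e2 in h1 *; have /eqP e : c == d :> nat by rewrite eqn_leq h1 h2.
by rewrite (val_inj e).
Qed.

Lemma Gs_free : row_free Gs.
Proof.
apply/row_freeP.
exists (\matrix_(k, r) (k == mxvec_index (enum_val r).1 (enum_val r).2)%:R).
apply/matrixP => r r'; rewrite !mxE.
under eq_bigr do rewrite !mxE.
rewrite sum_delta /= -/(mxvec _ 0 _) mxvecE EpE.
have hr := enum_valP r; have hr' := enum_valP r'.
rewrite -surjective_pairing.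
case: (eqVneq r r') => [<-|ne]; first by rewrite eqxx.
have -> : (enum_val r' == enum_val r) = false.
  by apply/negbTE; apply: contra ne => /eqP/enum_val_inj ->.
case: eqP => // e; exfalso.
have := @Pu_swap _ _ hr hr' e => /enum_val_inj e'; by rewrite e' eqxx in ne.
Qed.

Lemma Gs_sym (u : 'rV[R]_#|Pu|) : (vec_mx (u *m Gs))^T = vec_mx (u *m Gs).
Proof.
have hG : Gs *m lin_mx (@trmx R D D) = Gs.
  apply/row_matrixP => r; rewrite row_mul rowK mul_vec_lin /=.
  by rewrite Ep_sym.
apply: (can_inj mxvecK); rewrite -(mul_vec_lin (@trmx R D D)) vec_mxK.
by rewrite -mulmxA hG.
Qed.

Lemma sym_sub_Gs (X : 'M[R]_D) : X^T = X -> (mxvec X <= Gs)%MS.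
Proof.
move=> hX; apply/submxP.
exists (\row_r X (enum_val r).1 (enum_val r).2).
apply/rowP => k; case/mxvec_indexP: k => a b.
rewrite mxvecE !mxE.
under eq_bigr do rewrite !mxE -/(mxvec _ 0 _) mxvecE EpE.
wlog hab : a b / (a <= b)%N.
  move=> H; case: (leqP a b) => h; first exact: H.
  rewrite -{1}hX mxE H; last exact: ltnW.
  by apply: eq_bigr => r _; rewrite orbC.
have hP : (a, b) \in Pu by rewrite inE.
rewrite (bigD1 (enum_rank_in hP (a, b))) //= enum_rankK_in // eqxx /=.
rewrite mulr1 big1 ?addr0 // => r hr.
have hr' := enum_valP r.
case: eqP => [e|_]; first by move: hr; rewrite -(inj_eq enum_val_inj) enum_rankK_in // e eqxx.
case: eqP => [e|_]; last by rewrite mulr0.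
have e' : enum_val r = (a, b) by apply: (@Pu_swap _ _ hP hr'); rewrite -e.
by move: hr; rewrite -(inj_eq enum_val_inj) enum_rankK_in // e' eqxx.
Qed.


End Sym.

Lemma dotv_tr (D : nat) (A B : 'M[R]_D) :
  (mxvec A *m (mxvec B)^T) 0 0 = \tr (A *m B^T).
Proof.
rewrite mxE (reindex _ (curry_mxvec_bij D D)) /=.
rewrite /mxtrace; under [RHS]eq_bigr do rewrite mxE.
rewrite pair_bigA /=; apply: eq_bigr => [[i j]] _ /=.
by rewrite !mxE -/(mxvec _ 0 _) mxvecE -/(mxvec _ 0 _) mxvecE.
Qed.

Lemma rv_self0 (n : nat) (z : 'rV[R]_n) : (z *m z^T) 0 0 = 0 -> z = 0.
Proof.
rewrite mxE => h; apply/rowP => k; rewrite mxE.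
have h0 : forall i : 'I_n, true -> 0 <= z 0 i * z^T i 0.
  by move=> i _; rewrite mxE -expr2 sqr_ge0.
have := psumr_eq0P h0 h (i := k) isT.
by rewrite mxE -expr2 => /eqP; rewrite sqrf_eq0 => /eqP.
Qed.

Lemma tr_congr (D : nat) (P B Z : 'M[R]_D) :
  \tr ((P *m B *m P^T) *m Z^T) = \tr (B *m (P^T *m Z *m P)^T).
Proof.
rewrite !trmx_mul trmxK -!mulmxA mxtrace_mulC -!mulmxA; congr (\tr (B *m _)).
Qed.

Lemma entry_cols (D n : nat) (N : 'M[R]_(D, n)) (Y : 'M[R]_D) a b :
  Y^T = Y -> \tr (col a N *m (col b N)^T *m Y^T) = (N^T *m Y *m N) b a.
Proof.
move=> hY; rewrite hY -mulmxA mxtrace_mulC trace_mx11 tr_col.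
rewrite -row_mul !mxE; apply: eq_bigr => k _; by rewrite !mxE.
Qed.

Lemma Bmat_tr (D n : nat) (N : 'M[R]_(D, n)) (Y : 'M[R]_D) p :
  Y^T = Y -> \tr (Bmat N p *m Y^T) = (N^T *m Y *m N) p.1 p.2.
Proof.
move=> hY; rewrite /Bmat -scalemxAl mxtraceZ mulmxDl mxtraceD !entry_cols //.
have -> : (N^T *m Y *m N) p.1 p.2 = (N^T *m Y *m N) p.2 p.1.
  set M := N^T *m Y *m N.
  have E : M^T = M by rewrite /M !trmx_mul trmxK hY mulmxA.
  by rewrite -[M in LHS]E mxE.
set x := (N^T *m Y *m N) _ _; by field.
Qed.


Definition posdef n (X : 'M[R]_n) := forall v : 'rV_n, v != 0 -> 0 < (v *m X *m v^T) 0 0.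
Arguments posdef {n}.

Lemma chol n (X : 'M[R]_n) : X^T = X -> posdef X ->
  exists2 Q : ('M[R]_n), Q \in unitmx & Q^T *m Q = X.
Proof.
move: X; elim: n => [|n IH] X hs hp.
  by exists 1%:M; [exact: unitmx1 | apply/matrixP => [[]]].
pose X1 : 'M[R]_(1 + n) := X.
set a := ulsubmx X1; set b := ursubmx X1; set c := dlsubmx X1; set d := drsubmx X1.
have eX : X1 = block_mx a b c d by rewrite submxK.
have [ea ec eb ed] : [/\ a^T = a, c^T = b, b^T = c & d^T = d].
  have hs1 : X1^T = X1 := hs.
  move: hs1; rewrite eX tr_block_mx => /eq_block_mx [-> -> -> ->].
  by [].
pose al := a 0 0.
have ha : a = al%:M by rewrite [a]mx11_scalar.
have halp : 0 < al.
  have hp1 : posdef X1 := hp.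
  have := hp1 (row_mx (1%:M : 'M_1) (0 : 'rV_n)).
  rewrite eX mul_row_block tr_row_mx mul_row_col !mul0mx !addr0 mul1mx.
  rewrite trmx0 mulmx0 addr0 trmx1 mulmx1 => H; apply: H.
  apply/negP => /eqP/rowP/(_ (lshift n 0)); rewrite row_mxEl !mxE /= => /eqP; by rewrite oner_eq0.
have al0 : al != 0 by rewrite gt_eqF.
pose S := d - al^-1 *: (c *m b).
have hS : S^T = S.
  by rewrite /S linearB /= linearZ /= trmx_mul ed ec eb.
have hpS : posdef S.
  move=> w wn0.
  pose u : 'M_1 := - (al^-1 *: (w *m c)).
  have hp1 : posdef X1 := hp.
  have := hp1 (row_mx u w).
  have hua : u *m a = - (w *m c).
    by rewrite ha mul_mx_scalar /u scalerN scalerA mulfV // scale1r.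
  rewrite eX mul_row_block tr_row_mx mul_row_col hua addNr mul0mx add0r.
  have -> : (u *m b + w *m d) *m w^T = w *m S *m w^T.
    rewrite /S /u mulmxBr mulmxDl mulmxBl addrC; congr (_ + _).
    by rewrite !mulNmx; congr (- _); rewrite -scalemxAr -!scalemxAl !mulmxA.
  move=> Hp; apply: Hp; apply/negP => /eqP /rowP H; move/negP: wn0; apply; apply/eqP/rowP => k.
  by have := H (rshift 1 k); rewrite row_mxEr !mxE.
have [Q' hQ'u hQ'] := IH S hS hpS.
pose sa := Num.sqrt al.
have sa0 : sa != 0 by rewrite sqrtr_eq0 -ltNge.
have hsa : sa * sa = al by rewrite -expr2 sqr_sqrtr // ltW.
pose Q : 'M[R]_(1 + n) := block_mx (sa%:M : 'M_1) (sa^-1 *: b) 0 Q'.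
exists Q.
  have hdet : \det Q = sa * \det Q' by rewrite /Q det_ublock det_scalar expr1.
  rewrite unitmxE; move: hdet; rewrite /= => ->.
  by rewrite unitrM unitfE sa0 /= -unitmxE.
change (Q^T *m Q = X1).
rewrite eX /Q tr_block_mx mulmx_block.
rewrite !trmx0 !mul0mx !mulmx0 !addr0 ?add0r tr_scalar_mx.
congr block_mx.
- by rewrite -scalar_mxM hsa ha.
- by rewrite mul_scalar_mx scalerA mulfV // scale1r.
- by rewrite mul_mx_scalar linearZ /= scalerA mulfV // scale1r eb.
- rewrite hQ' /S [(_ *: b)^T]linearZ /= -scalemxAl -scalemxAr scalerA eb.
  by rewrite -invfM hsa addrC subrK.
Qed.


Lemma pd_pert n (W : 'M[R]_n) : exists2 t : R, 0 < t & posdef (1%:M + t *: W).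
Proof.
pose C := \sum_j \sum_i `|W i j|.
have C0 : 0 <= C by apply: sumr_ge0 => j _; apply: sumr_ge0 => i _.
exists (1 + C)^-1; first by rewrite invr_gt0 ltr_wpDr.
move=> v vn0.
pose s := (v *m v^T) 0 0.
have hs : s = \sum_k v 0 k ^+ 2.
  by rewrite /s mxE; apply: eq_bigr => k _; rewrite mxE expr2.
have hvv : forall i, v 0 i ^+ 2 <= s.
  move=> i; rewrite hs (bigD1 i) //= lerDl; apply: sumr_ge0 => k _; exact: sqr_ge0.
have s0 : 0 < s.
  rewrite lt_def; apply/andP; split.
    by apply/eqP => h; move/eqP: vn0; apply; exact: rv_self0.
  by rewrite hs; apply: sumr_ge0 => k _; exact: sqr_ge0.
have hij : forall i j, `|v 0 i| * `|v 0 j| <= s.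
  move=> i j; have := hvv i; have := hvv j.
  rewrite -!(real_normK (num_real (v 0 _))).
  have := normr_ge0 (v 0 i); have := normr_ge0 (v 0 j).
  set x := `|v 0 i|; set y := `|v 0 j| => hy hx h2 h1.
  nra.
have key : `|(v *m W *m v^T) 0 0| <= C * s.
  rewrite mxE /C mulr_suml; apply: le_trans (ler_norm_sum _ _ _) _.
  apply: ler_sum => j _; rewrite mxE normrM.
  apply: le_trans (ler_wpM2r (normr_ge0 _) (ler_norm_sum _ _ _)) _.
  rewrite !mulr_suml; apply: ler_sum => i _; rewrite mxE normrM.
  rewrite [_ * `|W i j|]mulrC -mulrA; apply: ler_wpM2l => //.
set x := (v *m W *m v^T) 0 0 in key *.
have t0 : 0 < (1 + C)^-1 by rewrite invr_gt0 ltr_wpDr.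
have ht : (1 + C)^-1 * (1 + C) = 1 by rewrite mulVf // gt_eqF // ltr_wpDr.
move: key; rewrite ler_norml => /andP[k1 _].
set t := (1 + C)^-1 in t0 ht *.
have -> : (v *m (1%:M + t *: W) *m v^T) 0 0 = s + t * x.
  rewrite mulmxDr mulmx1 -scalemxAr mulmxDl -scalemxAl.
  by rewrite [LHS]mxE [X in _ + X]mxE.
have h1 : 0 <= t * (x + C * s) by apply: mulr_ge0; [exact: ltW | lra].
have h2 : 0 < t * s by apply: mulr_gt0.
have h3 : s = t * s + t * C * s.
  by transitivity (t * (1 + C) * s); [rewrite ht mul1r | ring].
lra.
Qed.

Lemma Bmat_sym (D n : nat) (N : 'M[R]_(D, n)) p : (Bmat N p)^T = Bmat N p.
Proof.
by rewrite /Bmat linearZ /= linearD /= !trmx_mul !trmxK addrC.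
Qed.

Lemma core (D n J : nat) (N : 'M[R]_(D, n)) (Rb : 'M[R]_D) (hRb : Rb \in unitmx)
  (theta : 'I_J -> 'I_n * 'I_n) (c : 'I_J -> R) (Q0 : 'M[R]_D) (hQ0 : Q0 \in unitmx)
  (hc : forall j, ((Q0 *m N)^T *m (Q0 *m N)) (theta j).1 (theta j).2 = c j) :
  (forall Q, Q \in unitmx ->
     (forall j, ((Q *m N)^T *m (Q *m N)) (theta j).1 (theta j).2 = c j) ->
     Q^T *m Q = Q0^T *m Q0)
  <-> \rank (vecB_matrix Rb N theta) = (D * (D + 1) %/ 2)%N.
Proof.
pose ell (Y : 'M[R]_D) j := (N^T *m Y *m N) (theta j).1 (theta j).2.
have hcon : forall Q : 'M[R]_D, forall j,
    ((Q *m N)^T *m (Q *m N)) (theta j).1 (theta j).2 = ell (Q^T *m Q) j.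
  by move=> Q j; rewrite /ell trmx_mul !mulmxA.
have ellB : forall Y1 Y2 j, ell (Y1 - Y2) j = ell Y1 j - ell Y2 j.
  by move=> Y1 Y2 j; rewrite /ell mulmxBr mulmxBl [LHS]mxE [X in _ + X]mxE.
have ellDZ : forall Y1 Y2 (t : R) j, ell (Y1 + t *: Y2) j = ell Y1 j + t * ell Y2 j.
  by move=> Y1 Y2 t j; rewrite /ell mulmxDr mulmxDl -scalemxAr -scalemxAl !mxE.
pose Cj j := Rb *m Bmat N (theta j) *m Rb^T.
have Cj_sym : forall j, (Cj j)^T = Cj j.
  by move=> j; rewrite /Cj !trmx_mul trmxK Bmat_sym mulmxA.
pose Cm := \matrix_(j < J) mxvec (Cj j).
have hCm : (vecB_matrix Rb N theta)^T = Cm.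
  apply/matrixP => j k; rewrite !mxE -/(Cj j) -[in RHS](Cj_sym j).
  by [].
have hCmZ : forall Z j, (Cm *m (mxvec Z)^T) j 0 = \tr (Cj j *m Z^T).
  move=> Z j; rewrite -dotv_tr !mxE; apply: eq_bigr => k _; by rewrite !mxE.
have hlink : forall Z j, (Rb^T *m Z *m Rb)^T = Rb^T *m Z *m Rb ->
    \tr (Cj j *m Z^T) = ell (Rb^T *m Z *m Rb) j.
  by move=> Z j hZ; rewrite tr_congr Bmat_tr.
have hCG : (Cm <= Gs D)%MS.
  by apply/row_subP => j; rewrite rowK; apply: sym_sub_Gs.
have rG : \rank (Gs D) = (D * (D + 1) %/ 2)%N.
  by rewrite (eqP (Gs_free D)) card_Pu.
rewrite -mxrank_tr hCm -rG; split; last first.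
  move=> hr Q hQ hQc.
  have hGC : (Gs D <= Cm)%MS.
    have e : (Cm == Gs D)%MS by rewrite -(mxrank_leqif_eq hCG).2 hr.
    by case/andP: e.
  pose Y := Q^T *m Q - Q0^T *m Q0.
  have hY : Y^T = Y by rewrite /Y linearB /= !trmx_mul !trmxK.
  have ellY : forall j, ell Y j = 0.
    by move=> j; rewrite ellB -!hcon hQc hc subrr.
  pose Z := invmx Rb^T *m Y *m invmx Rb.
  have eRZ : Rb^T *m Z *m Rb = Y.
    rewrite /Z !mulmxA mulmxV ?unitmx_tr // mul1mx -mulmxA mulVmx // mulmx1.
    by [].
  have hZ : Z^T = Z by rewrite /Z !trmx_mul !trmx_inv trmxK hY mulmxA.
  have /submxP [w ew] : (mxvec Z <= Cm)%MS.
    by apply: submx_trans hGC; apply: sym_sub_Gs.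
  have h0 : Cm *m (mxvec Z)^T = 0.
    apply/colP => j; rewrite hCmZ hlink; last by rewrite eRZ.
    by rewrite eRZ ellY mxE.
  have : mxvec Z *m (mxvec Z)^T = 0 by rewrite {1}ew -mulmxA h0 mulmx0.
  move=> /(congr1 (fun M : 'M[R]_1 => M 0 0)); rewrite [X in _ = X]mxE => h0'.
  have := rv_self0 _ _ h0'; move=> /eqP.
  rewrite mxvec_eq0 => /eqP Z0.
  by apply/eqP; rewrite -subr_eq0 -/Y -eRZ Z0 mulmx0 mul0mx.
move=> huniq; apply/eqP/negPn/negP => hne.
have hlt : (\rank Cm < \rank (Gs D))%N by rewrite ltn_neqAle hne mxrankS.
pose K := kermx (Gs D *m Cm^T).
have rK : (0 < \rank K)%N.
  rewrite mxrank_ker subn_gt0 (leq_ltn_trans (mxrankM_maxr _ _)) //.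
  by rewrite mxrank_tr -(eqP (Gs_free D)).
have [i hi] : exists i, row i K != 0.
  apply/existsP; apply: contraTT rK; rewrite negb_exists => /forallP H.
  rewrite -leqNgt leqn0 mxrank_eq0; apply/eqP/row_matrixP => i.
  by rewrite row0; apply/eqP; have := H i; rewrite negbK.
pose u := row i K.
have hu : u *m (Gs D *m Cm^T) = 0 by apply/sub_kermxP; exact: row_sub.
pose z := u *m Gs D.
have zn0 : z != 0 by rewrite /z mulmx_free_eq0 // Gs_free.
pose Z := vec_mx z.
have hZ : Z^T = Z by exact: Gs_sym.
have ezZ : mxvec Z = z by rewrite /Z vec_mxK.
have hCz : Cm *m z^T = 0.
  by rewrite -[Cm]trmxK -trmx_mul /z -mulmxA hu trmx0.
pose Y := Rb^T *m Z *m Rb.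
have hY : Y^T = Y by rewrite /Y !trmx_mul trmxK hZ mulmxA.
have ellY : forall j, ell Y j = 0.
  move=> j; rewrite /Y -hlink; last exact: hY.
  by rewrite -hCmZ ezZ hCz mxE.
have Yn0 : Y != 0.
  apply: contra zn0 => /eqP Y0; rewrite -ezZ mxvec_eq0.
  have : invmx Rb^T *m Y *m invmx Rb = Z.
    rewrite /Y !mulmxA mulVmx ?unitmx_tr // mul1mx -mulmxA mulmxV // mulmx1.
    by [].
  by rewrite Y0 mulmx0 mul0mx => <-.
clearbody Y.
pose W := invmx Q0^T *m Y *m invmx Q0.
have hW : W^T = W by rewrite /W !trmx_mul !trmx_inv trmxK hY mulmxA.
have eQW : Q0^T *m W *m Q0 = Y.
  rewrite /W !mulmxA mulmxV ?unitmx_tr // mul1mx -mulmxA mulVmx // mulmx1.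
  by [].
have [t t0 hpd] := pd_pert _ W.
have hX : (1%:M + t *: W)^T = 1%:M + t *: W.
  by rewrite linearD /= linearZ /= hW trmx1.
have [Q1 hQ1 eQ1] := chol _ _ hX hpd.
have eQ : (Q1 *m Q0)^T *m (Q1 *m Q0) = Q0^T *m Q0 + t *: Y.
  rewrite trmx_mul -mulmxA [Q1^T *m _]mulmxA eQ1 mulmxDl mul1mx -scalemxAl.
  by rewrite mulmxDr -scalemxAr -eQW !mulmxA.
have := huniq (Q1 *m Q0).
rewrite unitmx_mul hQ1 hQ0 eQ => /(_ isT).
have : forall j, ((Q1 *m Q0 *m N)^T *m (Q1 *m Q0 *m N)) (theta j).1 (theta j).2 = c j.
  by move=> j; rewrite hcon eQ ellDZ ellY mulr0 addr0 -hcon hc.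
move=> H /(_ H) /eqP; rewrite -subr_eq0 addrC addKr scaler_eq0 (negbTE Yn0) orbF.
by rewrite gt_eqF.
Qed.


Lemma gram_one (D : nat) (A : 'M[R]_D) : A \in unitmx ->
  A^T *m A *m (invmx A *m (invmx A)^T) = 1%:M.
Proof.
move=> hA; rewrite mulmxA -[A^T *m A *m invmx A]mulmxA mulmxV // mulmx1.
by rewrite -trmx_mul mulVmx // trmx1.
Qed.

Lemma gram_eq (D : nat) (A B : 'M[R]_D) : A \in unitmx -> B \in unitmx ->
  invmx B *m (invmx B)^T = A^T *m A -> B^T *m B = invmx A *m (invmx A)^T.
Proof.
move=> hA hB e.
rewrite -[B^T *m B]mulmx1 -(gram_one _ _ hA) mulmxA -e gram_one // mul1mx.
by [].
Qed.
End Main.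
Arguments core {R D n J N Rb} hRb {theta c Q0} hQ0 hc.
Arguments gram_eq {R D A B}.

Theorem lemma3 (R : realType) (D W V K : nat)
  (hD : (0 < D)%N) (hW : (0 < W)%N) (hV : (0 < V)%N) (hK : (0 < K)%N)
  (Dm : 'M[R]_(W, V * K)) (hrank : \rank Dm = D)
  (fI : 'I_D -> 'I_W) (fL : 'I_D -> 'I_(V * K))
  (hfI : {homo fI : i j / (i < j)%N}) (hfL : {homo fL : i j / (i < j)%N})
  (hsq : \rank (mxsub fI fL Dm) = D)
  (s : sharp) (J : nat)
  (theta : 'I_J -> 'I_(dimS s W (V * K)) * 'I_(dimS s W (V * K)))
  (c : 'I_J -> R)
  (P0st : 'M[R]_(D, W)) (P0m : 'M[R]_(D, V * K))
  (hP0 : P0st^T *m P0m = Dm)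
  (Pst : 'M[R]_(D, W)) (Pm : 'M[R]_(D, V * K))
  (hP : compatible s theta c Dm Pst Pm)
  (A : 'M[R]_D) (hA : A \in unitmx)
  (hPst : Pst = (invmx A)^T *m P0st) (hPm : Pm = A *m P0m) :
  let R0st := colsub fI P0st in
  let R0m := colsub fL P0m in
  (forall A' : 'M[R]_D, A' \in unitmx ->
     compatible s theta c Dm ((invmx A')^T *m P0st) (A' *m P0m) ->
     A'^T *m A' = A^T *m A)
  <->
  \rank (vecB_matrix (pick_sq (sharp_bar s) R0st R0m)
                     (pick_sharp s P0st P0m) theta)
  = (D * (D + 1) %/ 2)%N.
Proof.
move=> R0st R0m.
have hprod : R0st^T *m R0m = mxsub fI fL Dm.
  rewrite -hP0 mxsub_mul; congr (_ *m _).
  by apply/matrixP => i j; rewrite !mxE.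
have hu : (R0st^T *m R0m) \in unitmx by rewrite hprod -row_free_unit /row_free hsq.
rewrite unitmx_mul unitmx_tr in hu; case/andP: hu => huS huM.
have hcomp1 : forall A' : 'M[R]_D, A' \in unitmx ->
    ((invmx A')^T *m P0st)^T *m (A' *m P0m) = Dm.
  move=> A' hA'; rewrite trmx_mul trmxK -mulmxA [invmx A' *m _]mulmxA mulVmx //.
  by rewrite mul1mx.
case: hP => _ hPc.
destruct s.
-
  have hQ0 : (invmx A)^T \in unitmx by rewrite unitmx_tr unitmx_inv.
  have hc : forall j, (((invmx A)^T *m P0st)^T *m ((invmx A)^T *m P0st))
      (theta j).1 (theta j).2 = c j.
    by move=> j; rewrite -hPst; exact: hPc.
  rewrite /= -(core huM hQ0 hc); split.
  + move=> H Q hQ hQc.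
    have hA' : (invmx Q)^T \in unitmx by rewrite unitmx_tr unitmx_inv.
    have e : (invmx (invmx Q)^T)^T = Q by rewrite trmx_inv trmxK invmxK.
    have hc2 : forall j, (((invmx (invmx Q)^T)^T *m P0st)^T *m
        ((invmx (invmx Q)^T)^T *m P0st)) (theta j).1 (theta j).2 = c j.
      by rewrite e.
    have := H _ hA' (conj (hcomp1 _ hA') hc2); rewrite trmxK => e2.
    by rewrite (gram_eq hA hQ e2) trmxK.
  + move=> H A' hA' [_ hc'].
    have hu' : (invmx A')^T \in unitmx by rewrite unitmx_tr unitmx_inv.
    have := H _ hu' hc'; rewrite !trmxK => e2.
    have e3 := gram_eq hQ0 hA' (etrans e2 (congr1 (mulmx^~ _) (esym (trmxK _)))).
    by rewrite e3 trmx_inv invmxK trmxK.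
-
  have hc : forall j, ((A *m P0m)^T *m (A *m P0m)) (theta j).1 (theta j).2 = c j.
    by move=> j; rewrite -hPm; exact: hPc.
  rewrite /= -(core huS hA hc); split.
  + move=> H Q hQ hQc; apply: H => //; split => //; exact: hcomp1.
  + by move=> H A' hA' [_ hc']; apply: H.
Qed.
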